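(* Let $n\ge 2$ be an integer and let $M$ be a countable dense subset of $(L_n,\tau_E|_{L_n})$. Then (1) $(X_n,\tau(M))$ is neither perfect nor Lindelöf; (2) $(X_n,\tau(L_n\setminus M))$ is second-countable but not $\sigma$-compact.
   Context: For $\overline{x},\overline{a}\in\mathbb R^n$ let $|\overline{x}-\overline{a}|$ be the Euclidean distance and $B(\overline{a},\epsilon)=\{\overline{x}\in\mathbb R^n:|\overline{x}-\overline{a}|<\epsilon\}$. Let $P_n=\{\overline{x}\in\mathbb R^n: x_n>0\}$, $L_n=\{\overline{x}\in\mathbb R^n: x_n=0\}$, $X_n=P_n\cup L_n$, and let $\tau_E$ denote the Euclidean topology on $X_n$. For $\overline{a}\in L_n$ and $\epsilon>0$ put $\overline{a(\epsilon)}=(a_1,\dots,a_{n-1},\epsilon)$ and $\tilde B(\overline{a},\epsilon)=\{\overline{a}\}\cup B(\overline{a(\epsilon)},\epsilon)$. For $A\subseteq L_n$, the topology $\tau(A)$ on $X_n$ is generated by the local bases: at $\overline{a}\in P_n$, the sets $B(\overline{a},\epsilon)$ with $0<\epsilon<a_n$; at $\overline{a}\in A$, the sets $B(\overline{a},\epsilon)\cap X_n$ with $\epsilon>0$; at $\overline{a}\in L_n\setminus A$, the sets $\tilde B(\overline{a},\epsilon)$ with $\epsilon>0$. A space is perfect if every closed set is a $G_\delta$-set. *)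

(* Defs.v *)
From HB Require Import structures.
From mathcomp Require Import all_boot all_order all_algebra.
From mathcomp Require Import all_classical all_reals.
Import Order.TTheory GRing.Theory Num.Theory.

Set Implicit Arguments.
Unset Strict Implicit.
Unset Printing Implicit Defensive.

Local Open Scope classical_set_scope.
Local Open Scope ring_scope.

(** * General topological notions, for a topology on a carrier set [X : set T]
    given by its predicate of open sets [op] (open sets are subsets of X). *)
Section GeneralTopology.
Variables (T : Type) (X : set T) (op : set T -> Prop).

Definition closed_in (C : set T) : Prop := C `<=` X /\ op (X `\` C).

Definition Gdelta_in (C : set T) : Prop :=
  exists U : nat -> set T, (forall k, op (U k)) /\ C = \bigcap_k U k.

Definition perfect_sp : Prop := forall C, closed_in C -> Gdelta_in C.

Definition lindelof_sp : Prop :=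
  forall F : set (set T), (forall U, F U -> op U) -> X `<=` \bigcup_(U in F) U ->
  exists G : set (set T), [/\ G `<=` F, countable G & X `<=` \bigcup_(U in G) U].

Definition compact_in (K : set T) : Prop :=
  K `<=` X /\
  forall F : set (set T), (forall U, F U -> op U) -> K `<=` \bigcup_(U in F) U ->
  exists G : set (set T), [/\ G `<=` F, finite_set G & K `<=` \bigcup_(U in G) U].

Definition sigma_compact_sp : Prop :=
  exists K : nat -> set T, (forall k, compact_in (K k)) /\ X = \bigcup_k K k.

Definition second_countable_sp : Prop :=
  exists B : set (set T), [/\ countable B, (forall V, B V -> op V) &
    forall U x, op U -> U x -> exists V, [/\ B V, V x & V `<=` U]].

End GeneralTopology.

(** * The spaces X_n with topologies tau(A). Points of R^n are functions 'I_n -> R;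
    the n-th (last) coordinate has index n.-1. *)
Section Xn.
Variables (R : realType) (n : nat).

Definition pt := 'I_n -> R.

(** k-th coordinate (0-based); 0 if out of range. *)
Definition coord (x : pt) (k : nat) : R :=
  if insub k is Some i then x i else 0.

Definition lastc (x : pt) : R := coord x n.-1.

Definition edist (x a : pt) : R := Num.sqrt (\sum_(i < n) (x i - a i) ^+ 2).

Definition eball (a : pt) (e : R) : set pt := [set x | edist x a < e].

Definition Pn : set pt := [set x | 0 < lastc x].
Definition Ln : set pt := [set x | lastc x = 0].
Definition Xn : set pt := Pn `|` Ln.

Definition lift (a : pt) (e : R) : pt :=
  fun i => if val i == n.-1 then e else a i.

Definition tball (a : pt) (e : R) : set pt := [set a] `|` eball (lift a e) e.

(** [basic A a V]: V belongs to the prescribed local base at a for tau(A). *)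
Definition basic (A : set pt) (a : pt) (V : set pt) : Prop :=
  [\/ Pn a /\ exists e : R, [/\ 0 < e, e < lastc a & V = eball a e],
      [/\ Ln a, A a & exists e : R, 0 < e /\ V = eball a e `&` Xn]
    | [/\ Ln a, ~ A a & exists e : R, 0 < e /\ V = tball a e]].

Definition tau_open (A : set pt) (U : set pt) : Prop :=
  U `<=` Xn /\ forall a, U a -> exists V, basic A a V /\ V `<=` U.

Definition dense_in_Ln (M : set pt) : Prop :=
  M `<=` Ln /\
  forall a, Ln a -> forall e : R, 0 < e -> exists m, M m /\ edist m a < e.

End Xn.

(* Main.v *)
Set Warnings "-all".
Require Import Defs.
From HB Require Import structures.
From mathcomp Require Import all_boot all_order all_algebra.
From mathcomp Require Import all_classical all_reals.
From mathcomp Require Import lra ring zify.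
Import Order.TTheory GRing.Theory Num.Theory.
Set Implicit Arguments.
Unset Strict Implicit.
Unset Printing Implicit Defensive.
Local Open Scope classical_set_scope.
Local Open Scope ring_scope.

Lemma minl (R : realType) (a b : R) : Num.min a b <= a.
Proof. by rewrite ge_min lexx. Qed.
Lemma minr (R : realType) (a b : R) : Num.min a b <= b.
Proof. by rewrite ge_min lexx orbT. Qed.
Lemma min_gt (R : realType) (a b c : R) : c < a -> c < b -> c < Num.min a b.
Proof. by move=> h1 h2; rewrite lt_min h1 h2. Qed.

Section Metric.
Variables (R : realType) (n : nat).
Implicit Types (x y z a : pt R n).

Lemma sum_sq_le (I : Type) (s : seq I) (F : I -> R) :
  (forall i, 0 <= F i) ->
  \sum_(i <- s) F i ^+ 2 <= (\sum_(i <- s) F i) ^+ 2.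
Proof.
move=> F0; elim: s => [|a s IH]; first by rewrite !big_nil expr0n.
rewrite !big_cons.
have S0 : 0 <= \sum_(i <- s) F i by apply: sumr_ge0.
have := F0 a; nra.
Qed.

Lemma CS (u v : 'I_n -> R) :
  (\sum_i u i * v i) ^+ 2 <= (\sum_i u i ^+ 2) * (\sum_i v i ^+ 2).
Proof.
have H : 0 <= \sum_i \sum_j (u i * v j - u j * v i) ^+ 2.
  by apply: sumr_ge0 => i _; apply: sumr_ge0 => j _; apply: sqr_ge0.
have E : \sum_i \sum_j (u i * v j - u j * v i) ^+ 2 =
   2 * ((\sum_i u i ^+ 2) * (\sum_i v i ^+ 2)) - 2 * (\sum_i u i * v i) ^+ 2.
  have E1 : forall i j, (u i * v j - u j * v i) ^+ 2 =
     u i ^+ 2 * v j ^+ 2 + u j ^+ 2 * v i ^+ 2 - 2 * ((u i * v i) * (u j * v j)).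
    by move=> i j; ring.
  under eq_bigr do under eq_bigr do rewrite E1.
  under eq_bigr do rewrite sumrB big_split /=.
  rewrite sumrB big_split /=.
  have EA : \sum_i \sum_j u i ^+ 2 * v j ^+ 2 = (\sum_i u i ^+ 2) * (\sum_i v i ^+ 2).
    by rewrite big_distrlr.
  have EB : \sum_i \sum_j u j ^+ 2 * v i ^+ 2 = (\sum_i u i ^+ 2) * (\sum_i v i ^+ 2).
    by rewrite exchange_big big_distrlr.
  have EC : \sum_i \sum_j 2 * (u i * v i * (u j * v j)) = 2 * (\sum_i u i * v i) ^+ 2.
    rewrite expr2 big_distrlr mulr_sumr; apply: eq_bigr => i _.
    by rewrite mulr_sumr.
  rewrite EA EB EC; ring.
nra.
Qed.

Lemma sumsq_ge0 (u : 'I_n -> R) : 0 <= \sum_i u i ^+ 2.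
Proof. by apply: sumr_ge0 => i _; apply: sqr_ge0. Qed.

Lemma edist_ge0 x a : 0 <= edist x a.
Proof. exact: sqrtr_ge0. Qed.

Lemma edist_sq x a : edist x a ^+ 2 = \sum_i (x i - a i) ^+ 2.
Proof. by rewrite /edist sqr_sqrtr // sumsq_ge0. Qed.

Lemma edist_sym x a : edist x a = edist a x.
Proof. by rewrite /edist; congr Num.sqrt; apply: eq_bigr => i _; rewrite -sqrrN opprB. Qed.

Lemma edist_xx x : edist x x = 0.
Proof. by rewrite /edist big1 ?sqrtr0 // => i _; rewrite subrr expr0n. Qed.

Lemma sq_le_sq (a b : R) : 0 <= b -> a ^+ 2 <= b ^+ 2 -> a <= b.
Proof. move=> b0 h; nra. Qed.

Lemma edist_coord x a i : `|x i - a i| <= edist x a.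
Proof.
apply: sq_le_sq; first exact: edist_ge0.
rewrite edist_sq real_normK ?num_real //. rewrite (bigD1 i) //= lerDl.
by apply: sumr_ge0 => j _; apply: sqr_ge0.
Qed.

Lemma edist_le_sum x a : edist x a <= \sum_i `|x i - a i|.
Proof.
apply: sq_le_sq; first by apply: sumr_ge0.
rewrite edist_sq.
have := @sum_sq_le _ (index_enum 'I_n) (fun i => `|x i - a i|) (fun i => normr_ge0 (x i - a i)).
suff -> : \sum_i (x i - a i) ^+ 2 = \sum_(i <- index_enum 'I_n) `|x i - a i| ^+ 2 by []. by apply: eq_bigr => i _; rewrite real_normK ?num_real.
Qed.

Lemma edist_tri x y z : edist x z <= edist x y + edist y z.
Proof.
apply: sq_le_sq; first by rewrite addr_ge0 ?edist_ge0.
pose u i := x i - y i; pose v i := y i - z i.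
have Hx : edist x z ^+ 2 = \sum_i u i ^+ 2 + 2 * \sum_i u i * v i + \sum_i v i ^+ 2.
  rewrite edist_sq mulr_sumr -!big_split /=; apply: eq_bigr => i _.
  rewrite /u /v; ring.
have A0 := sumsq_ge0 u. have B0 := sumsq_ge0 v.
have HA : edist x y ^+ 2 = \sum_i u i ^+ 2 by rewrite edist_sq.
have HB : edist y z ^+ 2 = \sum_i v i ^+ 2 by rewrite edist_sq.
have HS := CS u v.
have e1 := edist_ge0 x y. have e2 := edist_ge0 y z.
have HS' : \sum_i u i * v i <= edist x y * edist y z.
  apply: sq_le_sq; first by rewrite mulr_ge0.
  by rewrite exprMn HA HB.
rewrite Hx; nra.
Qed.

End Metric.

Section Geom.
Variables (R : realType) (n : nat) (hn : (1 < n)%N).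
Implicit Types (x y z a q : pt R n) (A : set (pt R n)).

Local Notation XX := (@Xn R n).
Local Notation PP := (@Pn R n).
Local Notation LL := (@Ln R n).
Let hn0 : (0 < n)%N. Proof. by apply: leq_trans hn. Qed.
Let hil : (n.-1 < n)%N. Proof. by rewrite ltn_predL. Qed.
Let hi0 : (0 < n)%N. Proof. exact: hn0. Qed.
Definition il : 'I_n := Ordinal hil.
Definition i0 : 'I_n := Ordinal hi0.

Lemma i0_il : i0 != il.
Proof. by apply/eqP => /(congr1 val) /= h; move: hn h; lia. Qed.

Lemma lastcE x : lastc x = x il.
Proof.
rewrite /lastc /Defs.coord; have -> : insub n.-1 = Some il by rewrite insubT.
by [].
Qed.

Lemma coord0E x : Defs.coord x 0 = x i0.
Proof.
rewrite /Defs.coord; have -> : insub 0%N = Some i0 by rewrite insubT.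
by [].
Qed.

Lemma last_le x a : `|lastc x - lastc a| <= edist x a.
Proof. by rewrite !lastcE edist_coord. Qed.

Lemma PL_disj x : Pn x -> Ln x -> False.
Proof. by rewrite /Pn /Ln /= => h e; rewrite e ltxx in h. Qed.

Lemma Pn_ball x y : edist y x < lastc x -> Pn y.
Proof.
move=> h; have := last_le y x; rewrite /Pn /=.
move: (lastc y) (lastc x) h => u v h1 h2.
have := ler_norm (v - u); rewrite distrC; lra.
Qed.

Lemma lift_last a e : lastc (Defs.lift a e) = e.
Proof. by rewrite lastcE /Defs.lift /= eqxx. Qed.

Lemma lift_other a e i : i != il -> Defs.lift a e i = a i.
Proof.
move=> h; rewrite /Defs.lift; case: eqP => // E; case/negP: h.
by apply/eqP/val_inj.
Qed.

Lemma edist_same x y : (forall i, i != il -> x i = y i) ->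
  edist x y = `|lastc x - lastc y|.
Proof.
move=> h; rewrite /edist (bigD1 il) //= big1 ?addr0 ?sqrtr_sqr ?lastcE //.
by move=> i /h ->; rewrite subrr expr0n.
Qed.

Lemma edist_lift a e : Ln a -> edist (Defs.lift a e) a = `|e|.
Proof.
move=> La; rewrite edist_same ?lift_last; first by rewrite La subr0.
by move=> i; apply: lift_other.
Qed.

Lemma edist_lift2 a e e' : edist (Defs.lift a e) (Defs.lift a e') = `|e - e'|.
Proof.
rewrite edist_same ?lift_last // => i hi; by rewrite !lift_other.
Qed.

Lemma tball_Pn a e y : eball (Defs.lift a e) e y -> Pn y.
Proof. by move=> h; apply: (Pn_ball (x := Defs.lift a e)); rewrite lift_last. Qed.

Lemma tball_L a e y : Ln y -> tball a e y -> y = a.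
Proof. by move=> Ly [->//|/tball_Pn Py]; case: (PL_disj Py Ly). Qed.

Lemma tball_X a e : Ln a -> tball a e `<=` XX.
Proof. by move=> La y [->|/tball_Pn]; [right|left]. Qed.

Lemma tball_ball a e y : Ln a -> 0 < e -> tball a e y -> edist y a < 2 * e.
Proof.
move=> La e0 [->|h]; first by rewrite edist_xx; lra.
have := edist_tri y (Defs.lift a e) a; rewrite edist_lift // gtr0_norm //.
move: h; rewrite /eball /=; lra.
Qed.

Lemma tball_mono a r e : 0 < r -> r <= e -> tball a r `<=` tball a e.
Proof.
move=> r0 re y [->|h]; first by left.
right; rewrite /eball /=.
have := edist_tri y (Defs.lift a r) (Defs.lift a e); rewrite edist_lift2.
rewrite ler0_norm ?subr_le0 //; move: h; rewrite /eball /=; lra.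
Qed.

Lemma Pn_nbhd A y q r : PP y -> edist y q < r ->
  exists V, basic A y V /\ V `<=` eball q r `&` PP.
Proof.
move=> Py yq; set d := edist y q.
have Py' : 0 < lastc y by [].
pose e := Num.min (r - d) (lastc y) / 2.
have m1 := minl (r - d) (lastc y).
have m2 := minr (r - d) (lastc y).
have em : 0 < Num.min (r - d) (lastc y) by rewrite lt_min subr_gt0 yq Py'.
have e0 : 0 < e by rewrite divr_gt0.
have e1 : e < r - d by rewrite /e; lra.
have e2 : e < lastc y by rewrite /e; lra.
exists (eball y e); split; first by apply: Or31; split => //; exists e.
move=> z zy; split; last by apply: Pn_ball (lt_trans zy e2).
have := edist_tri z y q; rewrite /eball /= -/d; move: zy; rewrite /eball /=; lra.
Qed.

Lemma open_ballX A q r : tau_open A (eball q r `&` XX).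
Proof.
split; first by move=> y [].
move=> y [yq [Py|Ly]].
  have [V [bV sV]] := Pn_nbhd A Py yq.
  by exists V; split => // z /sV [h1 h2]; split => //; left.
set d := edist y q.
have d0 : 0 < r - d by rewrite subr_gt0.
case: (pselect (A y)) => Ay.
  exists (eball y (r - d) `&` XX); split.
    by apply: Or32; split => //; exists (r - d).
  move=> z [zy zX]; split => //.
  have := edist_tri z y q; move: zy; rewrite /eball /= -/d; lra.
have e0 : 0 < (r - d) / 2 by rewrite divr_gt0.
exists (tball y ((r - d) / 2)); split.
  by apply: Or33; split => //; exists ((r - d) / 2).
move=> z zt; split; last exact: (tball_X Ly zt).
have := tball_ball Ly e0 zt; have := edist_tri z y q.
rewrite /eball /= -/d; lra.
Qed.

Lemma open_Pn A : tau_open A PP.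
Proof.
split; first by move=> y Py; left.
move=> y Py; have h : edist y y < 1 by rewrite edist_xx.
have [V [bV sV]] := Pn_nbhd A Py h.
by exists V; split => // z /sV [].
Qed.

Lemma open_tball A a e : LL a -> ~ A a -> 0 < e -> tau_open A (tball a e).
Proof.
move=> La Aa e0; split; first exact: tball_X.
move=> y [->|h].
  by exists (tball a e); split => //; apply: Or33; split => //; exists e.
have [V [bV sV]] := Pn_nbhd A (tball_Pn h) h.
by exists V; split => // z /sV [h1 _]; right.
Qed.

End Geom.

Section Baire.
Variables (R : realType) (n : nat) (hn : (1 < n)%N).
Local Notation LL := (@Ln R n).

Lemma dist_bound (x c : pt R n) (r : R) : (forall i, `|x i - c i| <= r) ->
  edist x c <= n%:R * r.
Proof.
move=> h; apply: le_trans (edist_le_sum x c) _.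
apply: le_trans (ler_sum _ (fun i _ => h i)) _.
by rewrite sumr_const card_ord mulr_natl.
Qed.

Lemma baire (F : nat -> set (pt R n)) :
  (forall k c r, LL c -> 0 < r -> exists c' r', [/\ LL c', 0 < r', r' <= r,
      (forall y, LL y -> edist y c' < r' -> edist y c < r) &
      (forall y, LL y -> edist y c' < r' -> ~ F k y)]) ->
  exists x, LL x /\ forall k, ~ F k x.
Proof.
move=> H.
have [g Hg] : {g : nat * (pt R n * R) -> pt R n * R & forall t,
    LL t.2.1 -> 0 < t.2.2 -> [/\ LL (g t).1, 0 < (g t).2, (g t).2 <= t.2.2,
      (forall y, LL y -> edist y (g t).1 < (g t).2 -> edist y t.2.1 < t.2.2) &
      (forall y, LL y -> edist y (g t).1 < (g t).2 -> ~ F t.1 y)]}.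
  apply: (@choice _ _ (fun t (u : pt R n * R) => LL t.2.1 -> 0 < t.2.2 -> [/\ LL u.1, 0 < u.2, u.2 <= t.2.2, (forall y, LL y -> edist y u.1 < u.2 -> edist y t.2.1 < t.2.2) & (forall y, LL y -> edist y u.1 < u.2 -> ~ F t.1 y)])).
  move=> [k [c r]] /=.
  case: (pselect (LL c /\ 0 < r)) => [[Lc r0]|nc].
    by have [c' [r' h]] := H k c r Lc r0; exists (c', r') => _ _.
  by exists (c, r) => Lc r0; case: nc.
pose N1 : R := n%:R + 1.
have N11 : 1 < N1 by rewrite /N1 -subr_gt0 addrK ltr0n; apply: leq_trans hn.
have N10 : 0 < N1 by apply: lt_trans N11.
pose s := fix s k := if k is k'.+1 then ((g (k', s k')).1, (g (k', s k')).2 / N1)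
                     else ((fun _ => 0) : pt R n, 1 : R).
have sS k : s k.+1 = ((g (k, s k)).1, (g (k, s k)).2 / N1) by [].
have inv k : LL (s k).1 /\ 0 < (s k).2.
  elim: k => [|k [IH1 IH2]].
    split; last by []. by rewrite /Ln /= /lastc /Defs.coord; case: insub.
  have [h1 h2 _ _ _] := Hg (k, s k) IH1 IH2.
  by rewrite sS /=; split => //; rewrite divr_gt0.
have step k : [/\ (s k.+1).2 < (g (k, s k)).2,
      (forall y, LL y -> edist y (s k.+1).1 < (g (k, s k)).2 -> edist y (s k).1 < (s k).2) &
      (forall y, LL y -> edist y (s k.+1).1 < (g (k, s k)).2 -> ~ F k y)].
  have [I1 I2] := inv k.
  have [h1 h2 h3 h4 h5] := Hg (k, s k) I1 I2.
  rewrite sS /=; split => //.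
  rewrite ltr_pdivrMr //; nra.
have nest k j : (k <= j)%N -> forall y, LL y -> edist y (s j).1 < (s j).2 ->
    edist y (s k).1 < (s k).2.
  move=> /subnKC <-; elim: (j - k)%N => [|m IH] y Ly; first by rewrite addn0.
  rewrite addnS => h; apply: IH => //.
  have [a1 a2 _] := step (k + m)%N.
  by apply: a2 => //; apply: lt_trans h a1.
have cc k j : (k <= j)%N -> edist (s j).1 (s k).1 < (s k).2.
  move=> kj; apply: nest kj _ (inv j).1 _.
  by rewrite edist_xx; exact: (inv j).2.
pose E i := [set (s j).1 i - (s j).2 | j in [set: nat]].
have ub i k : ubound (E i) ((s k).1 i + (s k).2).
  move=> _ [j _ <-].
  have [kj|jk] := leqP k j.
    have := edist_coord (s j).1 (s k).1 i; have := cc k j kj; have := (inv j).2.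
    move: ((s j).1 i) ((s k).1 i) => u v.
    have := ler_norm (u - v). lra.
  have := edist_coord (s k).1 (s j).1 i; have := cc j k (ltnW jk); have := (inv k).2.
  move: ((s j).1 i) ((s k).1 i) => u v.
  have := ler_norm (u - v); rewrite distrC; lra.
pose x : pt R n := fun i => if i == il hn then 0 else sup (E i).
have xb k i : `|x i - (s k).1 i| <= (s k).2.
  rewrite /x; case: eqP => [->|_].
    have := (inv k).1; rewrite /Ln /= lastcE // => ->.
    by rewrite subrr normr0 ltW // (inv k).2.
  have hub : has_ubound (E i) by exists ((s k).1 i + (s k).2); exact: ub i k.
  have l1 : (s k).1 i - (s k).2 <= sup (E i).
    by apply: ub_le_sup => //; exists k.
  have l2 : sup (E i) <= (s k).1 i + (s k).2.
    by apply: ge_sup; [exists ((s 0%N).1 i - (s 0%N).2); exists 0%N | exact: ub].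
  rewrite ler_norml; apply/andP; split; lra.
have Lx : LL x by rewrite /Ln /= lastcE // /x eqxx.
exists x; split => // k.
have [a1 _ a3] := step k.
apply: a3 => //.
apply: le_lt_trans (dist_bound (xb k.+1)) _.
rewrite sS /=.
have g0 : 0 < (g (k, s k)).2 by have [I1 I2] := inv k; have [] := Hg (k, s k) I1 I2.
rewrite mulrA ltr_pdivrMr // /N1; nra.
Qed.

End Baire.

Section Avoid.
Variable R : realType.

Lemma avoid1 (c : nat -> R) : exists t : R, forall k, (3%:R^-1) ^+ k / 6%:R <= `|t - c k|.
Proof.
pose s := fix s k := if k is k'.+1 then
   (if c k' < (s k').1 + (s k').2 / 2%:R then (s k').1 + 2%:R * (s k').2 / 3%:R else (s k').1,
    (s k').2 / 3%:R) else ((0 : R), (1 : R)).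
have sS k : s k.+1 = (if c k < (s k).1 + (s k).2 / 2%:R then (s k).1 + 2%:R * (s k).2 / 3%:R else (s k).1,
    (s k).2 / 3%:R) by [].
have l0 k : (s k).2 = (3%:R^-1) ^+ k.
  by elim: k => [//|k IH]; rewrite sS /= IH exprS mulrC.
have lp k : 0 < (s k).2 by rewrite l0 exprn_gt0 // invr_gt0.
have st k : [/\ (s k).1 <= (s k.+1).1, (s k.+1).1 + (s k.+1).2 <= (s k).1 + (s k).2 &
    forall t, (s k.+1).1 <= t <= (s k.+1).1 + (s k.+1).2 -> (s k).2 / 6%:R <= `|t - c k|].
  have := lp k; rewrite sS /=; move: ((s k).1) ((s k).2) => a l l0'.
  case: ifP => h; split; try lra.
    move=> t /andP[t1 t2]; rewrite ger0_norm; lra.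
  move=> t /andP[t1 t2]; rewrite ler0_norm; first lra.
  by move: h => /negbT; rewrite -leNgt; lra.
have mono k m : (s k).1 <= (s (k + m)%N).1 /\ (s (k + m)%N).1 + (s (k + m)%N).2 <= (s k).1 + (s k).2.
  elim: m => [|m [IH1 IH2]]; first by rewrite addn0.
  by rewrite addnS; have [h1 h2 _] := st (k + m)%N; split; lra.
have ab j k : (s j).1 <= (s k).1 + (s k).2.
  have [jk|kj] := leqP j k.
    have [h1 _] := mono j (k - j)%N; rewrite subnKC // in h1.
    have := lp k; lra.
  have [_ h2] := mono k (j - k)%N; rewrite subnKC // in h2; last exact: ltnW.
  have := lp j; lra.
pose E := [set (s j).1 | j in [set: nat]].
have hub : has_ubound E by exists ((s 0%N).1 + (s 0%N).2) => _ [j _ <-]; exact: ab.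
exists (sup E) => k.
have [_ _ h3] := st k.
rewrite -l0; apply: h3; apply/andP; split.
  by apply: ub_le_sup => //; exists k.+1.
by apply: ge_sup; [exists (s 0%N).1; exists 0%N | move=> _ [j _ <-]; exact: ab].
Qed.

End Avoid.

Lemma enum_countable T (d : T) (A : set T) : countable A ->
  exists e : nat -> T, (forall x, A x -> exists k, e k = x) /\ (A d -> forall k, A (e k)).
Proof.
move=> /countable_injP [f finj].
have [e He] : {e : nat -> T & forall k, (exists x, A x /\ f x = k) -> A (e k) /\ f (e k) = k}.
  apply: (@choice _ _ (fun k y => (exists x, A x /\ f x = k) -> A y /\ f y = k)) => k.
  case: (pselect (exists x, A x /\ f x = k)) => [[x hx]|nx]; first by exists x.
  by exists d.
pose e' k := if pselect (exists x, A x /\ f x = k) then e k else d.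
exists e'; split.
  move=> x Ax; exists (f x); rewrite /e'; case: pselect => [h|[]]; last by exists x.
  have [h1 h2] := He _ h; apply: finj => //; exact: mem_set.
move=> Ad k; rewrite /e'; case: pselect => // h; exact: (He _ h).1.
Qed.

Lemma finite_nat_bound (A : set nat) : finite_set A -> exists J, forall j, A j -> (j <= J)%N.
Proof.
move=> /finite_fsetP [X ->]; exists (\max_(j <- finmap.enum_fset X) j)%N => j /= jX.
by apply: (@leq_bigmax_seq _ _ xpredT id).
Qed.

Section Tools.
Variables (R : realType) (n : nat) (hn : (1 < n)%N).
Local Notation XX := (@Xn R n).
Local Notation PP := (@Pn R n).
Local Notation LL := (@Ln R n).
Implicit Types (x y z a c p : pt R n).

Lemma edist_eq0 x y : edist x y = 0 -> x = y.
Proof.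
move=> h; apply: funext => i; have := edist_coord x y i; rewrite h.
by rewrite normr_le0 subr_eq0 => /eqP.
Qed.

Lemma edist_one i x y : (forall j, j != i -> x j = y j) -> edist x y = `|x i - y i|.
Proof.
move=> h; rewrite /edist (bigD1 i) //= big1 ?addr0 ?sqrtr_sqr //.
by move=> j /h ->; rewrite subrr expr0n.
Qed.

Definition snd_for (P : set (pt R n)) := forall c r, LL c -> 0 < r ->
  exists c' r', [/\ LL c', 0 < r', r' <= r,
      (forall y, LL y -> edist y c' < r' -> edist y c < r) &
      (forall y, LL y -> edist y c' < r' -> ~ P y)].

Lemma snd_point p : snd_for [set y | y = p].
Proof.
move=> c r Lc r0.
have [h|h] := leP (r / 2) (edist c p).
  exists c, (r / 2); split => //; first by rewrite divr_gt0.
  - lra.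
  - move=> y _ yc; lra.
  - by move=> y _ yc /= yp; move: yc; rewrite yp edist_sym; lra.
pose c' : pt R n := fun i => if i == i0 hn then c i + r / 2 else c i.
have Lc' : LL c'.
  rewrite /Ln /= lastcE // /c' ifN; first by rewrite -lastcE.
  by rewrite eq_sym i0_il.
have dc : edist c' c = r / 2.
  rewrite (edist_one (i := i0 hn)); first by rewrite /c' eqxx addrC addKr ger0_norm //; lra.
  by move=> j /negbTE hj; rewrite /c' hj.
exists c', (r / 2 - edist c p); split => //.
- by rewrite subr_gt0.
- have := edist_ge0 c p; lra.
- move=> y _ yc; have := edist_tri y c' c; have := edist_ge0 c p; rewrite dc; lra.
- move=> y _ yc /= yp; rewrite yp in yc.
  have := edist_tri c p c'; rewrite (edist_sym c c') dc; lra.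
Qed.

Lemma baire2 (e : nat -> pt R n) (G : nat -> set (pt R n)) :
  (forall k, snd_for (G k)) ->
  exists x, [/\ LL x, forall k, ~ G k x & forall k, x <> e k].
Proof.
move=> H.
pose F j := if odd j then [set y | y = e j./2] else G j./2.
have HF : forall j, snd_for (F j).
  by move=> j; rewrite /F; case: (odd j); [exact: snd_point | exact: H].
have [x [Lx hx]] := @baire R n hn F HF.
exists x; split => // k.
  by have := hx k.*2; rewrite /F odd_double doubleK.
by have := hx k.*2.+1; rewrite /F /= odd_double /= uphalf_double.
Qed.

End Tools.

Section Main.
Variables (R : realType) (n : nat) (hn : (1 < n)%N) (M : set (pt R n))
  (hMc : countable M) (hMd : dense_in_Ln M).
Local Notation XX := (@Xn R n).
Local Notation PP := (@Pn R n).
Local Notation LL := (@Ln R n).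
Implicit Types (x y z a c p : pt R n).

Lemma ML x : M x -> LL x. Proof. exact: hMd.1. Qed.

Lemma dens c r : LL c -> 0 < r -> exists m, M m /\ edist m c < r.
Proof. by move=> Lc r0; have [m [Mm h]] := hMd.2 c Lc r r0; exists m. Qed.

Lemma M_enum : exists e : nat -> pt R n, (forall x, M x -> exists k, e k = x) /\ (forall k, M (e k)).
Proof.
have L0 : LL (fun _ => 0) by rewrite /Ln /= /lastc /Defs.coord; case: insub.
have [m0 [Mm0 _]] := dens L0 ltr01.
have [e [h1 h2]] := enum_countable m0 hMc.
by exists e; split => //; apply: h2.
Qed.

Lemma M_closed : closed_in XX (tau_open M) M.
Proof.
split; first by move=> x /ML Lx; right.
split; first by move=> x [].
move=> y [Xy nMy]; case: Xy => [Py|Ly].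
  have h : edist y y < 1 by rewrite edist_xx.
  have [V [bV sV]] := Pn_nbhd hn M Py h.
  exists V; split => // z /sV [_ Pz]; split; first by left.
  by move=> /ML Lz; apply: PL_disj Pz Lz.
exists (tball y 1); split.
  by apply: Or33; split => //; exists 1.
move=> z zt; split; first exact: tball_X zt.
by case: zt => [->//|/(tball_Pn hn) Pz /ML Lz]; apply: PL_disj Pz Lz.
Qed.

Lemma notPerfect : ~ perfect_sp XX (tau_open M).
Proof.
move=> P.
have [U [Uo UE]] := P M M_closed.
have [eM [eMs eMM]] := M_enum.
have MU m k : M m -> U k m by rewrite UE => h; apply: h.
have HG : forall k, snd_for [set y | ~ U k y].
  move=> k c r Lc r0.
  have r2 : 0 < r / 2 by rewrite divr_gt0.
  have [m [Mm mc]] := dens Lc r2.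
  have [V [bV sV]] := (Uo k).2 m (MU m k Mm).
  case: bV => [[Pm _]|[Lm _ [e [e0 VE]]]|[_ nM _]].
  - by case: (PL_disj Pm (ML Mm)).
  - have m1 := minl e (r / 2); have m2 := minr e (r / 2).
    exists m, (Num.min e (r / 2)); split => //.
    + by apply: min_gt.
    + lra.
    + move=> y _ ym; have := edist_tri y m c; lra.
    + move=> y Ly ym /=; apply; apply: sV; rewrite VE; split; last by right.
      rewrite /eball /=; lra.
  - by case: nM.
have [x [Lx hx hxe]] := baire2 hn eM HG.
have Mx : M x.
  rewrite UE => k _; have := hx k => /=; apply: contrapT.
have [k ek] := eMs x Mx.
exact: (hxe k (esym ek)).
Qed.

Definition rho (j : nat) : R := (3%:R^-1) ^+ j / 6%:R.
Lemma rho_gt0 j : 0 < rho j.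
Proof. by rewrite /rho divr_gt0 // exprn_gt0 // invr_gt0. Qed.

Definition line (t : R) : pt R n := fun i => if i == i0 hn then t else 0.
Lemma line_L t : LL (line t).
Proof. by rewrite /Ln /= lastcE // /line ifN // eq_sym i0_il. Qed.

Lemma notLindelof : ~ lindelof_sp XX (tau_open M).
Proof.
move=> HL.
have [eM [eMs eMM]] := M_enum.
pose Fam := [set U : set (pt R n) | [\/ U = PP,
   (exists a, [/\ LL a, ~ M a & U = tball a 1]) |
   (exists k, U = eball (eM k) (rho k.*2) `&` XX)]].
have Fo : forall U, Fam U -> tau_open M U.
  move=> U [->|[a [La nMa ->]]|[k ->]].
  - exact: open_Pn.
  - exact: open_tball.
  - exact: open_ballX.
have Fc : XX `<=` \bigcup_(U in Fam) U.
  move=> x Xx; case: Xx => [Px|Lx]; first by exists PP => //; apply: Or31.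
  case: (pselect (M x)) => [Mx|nMx].
    have [k ek] := eMs x Mx.
    exists (eball (eM k) (rho k.*2) `&` XX); first by apply: Or33; exists k.
    by split; [rewrite /eball /= ek edist_xx; apply: rho_gt0 | right].
  by exists (tball x 1); [apply: Or32; exists x | left].
have [G [GF Gc Gcov]] := HL Fam Fo Fc.
have [eG [eGs _]] := enum_countable set0 Gc.
have [sq Hsq] : {sq : nat -> pt R n & forall k, (exists a, LL a /\ eG k = tball a 1) ->
     LL (sq k) /\ eG k = tball (sq k) 1}.
  apply: (@choice _ _ (fun k s => (exists a, LL a /\ eG k = tball a 1) -> LL s /\ eG k = tball s 1)).
  move=> k; case: (pselect (exists a, LL a /\ eG k = tball a 1)) => [[a ha]|na].
    by exists a.
  by exists (fun _ => 0).
pose c j := if odd j then sq j./2 (i0 hn) else eM j./2 (i0 hn).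
have [t Ht] := avoid1 c.
have Xp : XX (line t) by right; exact: line_L.
have [U GU Up] := Gcov _ Xp.
case: (GF U GU) => [UE|[a [La nMa UE]]|[k UE]].
- by rewrite UE in Up; apply: PL_disj Up (line_L t).
- have pa : line t = a by rewrite UE in Up; exact: (tball_L hn (line_L t) Up).
  have [k ek] := eGs U GU.
  have [Lk Ek] := Hsq k (ex_intro _ a (conj La (etrans ek UE))).
  have ps : line t = sq k.
    by apply: (tball_L hn (line_L t) (e := 1)); rewrite -Ek ek.
  have := Ht k.*2.+1; rewrite /c /= odd_double /= uphalf_double -ps /line eqxx subrr normr0.
  have := rho_gt0 k.*2.+1; rewrite /rho; lra.
- rewrite UE in Up; case: Up => Up _.
  have := Ht k.*2; rewrite /c odd_double doubleK.
  have := edist_coord (line t) (eM k) (i0 hn); rewrite /line eqxx.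
  move: Up; rewrite /eball /= /rho; lra.
Qed.

Lemma rat_approx x e : 0 < e -> exists (q : {ffun 'I_n -> rat}) (r : rat),
   edist x (fun i => ratr (q i)) < ratr r /\
   forall y, edist y (fun i => ratr (q i)) < ratr r -> edist y x < e.
Proof.
move=> e0.
have n0 : 0 < n%:R :> R by rewrite ltr0n; apply: leq_trans hn.
pose d := e / (4 * n%:R).
have d0 : 0 < d by rewrite divr_gt0 // mulr_gt0.
have [f Hf] : {f : 'I_n -> rat & forall i, x i - d < ratr (f i) < x i + d}.
  apply: (@choice _ _ (fun i q => x i - d < ratr q < x i + d)) => i.
  have [q] := @rat_in_itvoo R (x i - d) (x i + d) ltac:(lra).
  by rewrite in_itv /= => hq; exists q.
exists [ffun i => f i].
have qE : (fun i => ratr ([ffun i => f i] i)) = (fun i => ratr (f i) : R).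
  by apply: funext => i; rewrite ffunE.
rewrite qE.
have b : edist x (fun i => ratr (f i)) <= n%:R * d.
  apply: dist_bound => i; have := Hf i; move: (ratr (f i)) => v /andP[h1 h2].
  by rewrite ler_norml; apply/andP; split; lra.
have nd : n%:R * d = e / 4.
  by rewrite /d; field; rewrite lt0r_neq0.
have [r] := @rat_in_itvoo R (e / 4) (e / 2) ltac:(lra).
rewrite in_itv /= => /andP[r1 r2].
exists r; split; first lra.
move=> y yq; have := edist_tri y (fun i => ratr (f i)) x.
rewrite edist_sym in b; lra.
Qed.

Lemma secondCountable : second_countable_sp (tau_open (LL `\` M)).
Proof.
have [eM [eMs eMM]] := M_enum.
pose h (u : ({ffun 'I_n -> rat} * rat) + (nat * rat)) : set (pt R n) :=
  match u with
  | inl (q, r) => eball (fun i => ratr (q i)) (ratr r) `&` XX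
  | inr (k, r) => tball (eM k) (ratr r) end.
pose B := [set V | (exists q r, V = h (inl (q, r))) \/ (exists k r, 0 < r /\ V = h (inr (k, r)))].
exists B; split.
- have sB : B `<=` range h.
    by move=> V [[q [r ->]]|[k [r [_ ->]]]]; eexists.
  apply: sub_countable (card_le_trans (subset_card_le sB) (card_image_le h setT)) _.
  exact: countableP.
- move=> V [[q [r ->]]|[k [r [r0 ->]]]]; first exact: open_ballX.
  apply: open_tball => //; first exact: ML.
    by move=> [].
  by rewrite ltr0q.
- move=> U x [_ Uo] Ux.
  have [V [bV sV]] := Uo x Ux.
  case: bV => [[Px [e [e0 _ VE]]]|[Lx _ [e [e0 VE]]]|[Lx nA [e [e0 VE]]]].
  + have [q [r [h1 h2]]] := rat_approx x e0.
    exists (h (inl (q, r))); split.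
    * by left; exists q, r.
    * by split => //; left.
    * move=> z [zq _]; apply: sV; rewrite VE; exact: h2.
  + have [q [r [h1 h2]]] := rat_approx x e0.
    exists (h (inl (q, r))); split.
    * by left; exists q, r.
    * by split => //; right.
    * move=> z [zq Xz]; apply: sV; rewrite VE; split => //; exact: h2.
  + have Mx : M x by apply: contrapT => nM; apply: nA.
    have [k ek] := eMs x Mx.
    have [r] := @rat_in_itvoo R 0 e e0.
    rewrite in_itv /= => /andP[r1 r2].
    exists (h (inr (k, r))); split.
    * by right; exists k, r; split => //; rewrite -(ltr0q R).
    * by rewrite /= ek; left.
    * move=> z zt; apply: sV; rewrite VE; apply: (tball_mono hn r1 (ltW r2)).
      by rewrite -ek.
Qed.

Definition w (j : nat) : R := ((j.+1)%:R)^-1.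
Lemma w_gt0 j : 0 < w j. Proof. by rewrite /w invr_gt0 ltr0n. Qed.
Lemma w_mono j J : (j <= J)%N -> w J <= w j.
Proof. by move=> jJ; rewrite /w lef_pV2 ?posrE ?ltr0n // ler_nat. Qed.
Lemma w_small (d : R) : 0 < d -> exists j, w j < d.
Proof.
move=> d0; exists (Num.truncn (d^-1)).
have h := real_truncnS_gt (num_real (d^-1)).
rewrite /w -[X in _ < X]invrK ltf_pV2 ?posrE ?invr_gt0 ?ltr0n //.
Qed.

Lemma compact_hole K m : compact_in XX (tau_open (LL `\` M)) K -> M m ->
  exists eta, 0 < eta /\ forall y, LL y -> ~ M y -> edist y m < eta -> ~ K y.
Proof.
move=> [KX Kc] Mm.
pose W (j : nat) := [set x | XX x /\ (PP x \/ M x \/ w j < edist x m)].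
have Wo j : tau_open (LL `\` M) (W j).
  split; first by move=> x [].
  move=> x [Xx hx]; case: (pselect (PP x)) => [Px|nPx].
    have h : edist x x < 1 by rewrite edist_xx.
    have [V [bV sV]] := Pn_nbhd hn (LL `\` M) Px h.
    by exists V; split => // z /sV [_ Pz]; split; left.
  have Lx : LL x by case: Xx.
  case: (pselect (M x)) => [Mx|nMx].
    exists (tball x 1); split.
      by apply: Or33; split => //; [case => _ /(_ Mx) | exists 1].
    move=> z zt; split; first exact: tball_X zt.
    by case: zt => [->|/(tball_Pn hn) Pz]; [right; left | left].
  case: hx => [//|[//|hd]].
  set d := edist x m in hd.
  have e0 : 0 < d - w j by rewrite subr_gt0.
  exists (eball x (d - w j) `&` XX); split.
    by apply: Or32; split => //; exists (d - w j).
  move=> z [zx Xz]; split => //; right; right.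
  have := edist_tri x z m; rewrite (edist_sym x z); move: zx; rewrite /eball /= -/d; lra.
pose Fam := [set U | exists j, U = W j].
have Fo : forall U, Fam U -> tau_open (LL `\` M) U by move=> U [j ->].
have Fc : K `<=` \bigcup_(U in Fam) U.
  move=> x Kx; have Xx := KX x Kx.
  have [j hj] : exists j, W j x.
    case: (Xx) => [Px|Lx]; first by exists 0%N; split => //; left.
    case: (pselect (M x)) => [Mx|nMx]; first by exists 0%N; split => //; right; left.
    have d0 : 0 < edist x m.
      rewrite lt0r edist_ge0 andbT; apply/eqP => /edist_eq0 xm.
      by apply: nMx; rewrite xm.
    have [j hj] := w_small d0.
    by exists j; split => //; right; right.
  by exists (W j) => //; exists j.
have [G [GF Gfin Gcov]] := Kc Fam Fo Fc.
have [idx Hidx] : {idx : set (pt R n) -> nat & forall U, Fam U -> U = W (idx U)}.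
  apply: (@choice _ _ (fun U j => Fam U -> U = W j)) => U.
  case: (pselect (Fam U)) => [[j hj]|nU]; first by exists j.
  by exists 0%N.
have [J HJ] := finite_nat_bound (finite_image idx Gfin).
exists (w J); split; first exact: w_gt0.
move=> y Ly nMy yw Ky.
have [U GU Uy] := Gcov y Ky.
have := Hidx U (GF U GU) => UE; rewrite UE in Uy.
case: Uy => _ [Py|[My|hy]].
- exact: PL_disj Py Ly.
- exact: nMy.
- have := w_mono (HJ (idx U) (ex_intro2 _ _ U GU erefl)); lra.
Qed.

Lemma notSigma : ~ sigma_compact_sp XX (tau_open (LL `\` M)).
Proof.
move=> [K [Kc KE]].
have [eM [eMs eMM]] := M_enum.
have HG : forall k, snd_for [set y | K k y /\ ~ M y].
  move=> k c r Lc r0.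
  have r2 : 0 < r / 2 by rewrite divr_gt0.
  have [m [Mm mc]] := dens Lc r2.
  have [eta [eta0 Heta]] := compact_hole (Kc k) Mm.
  have m1 := minl eta (r / 2); have m2 := minr eta (r / 2).
  exists m, (Num.min eta (r / 2)); split => //.
  + exact: ML.
  + by apply: min_gt.
  + lra.
  + move=> y _ ym; have := edist_tri y m c; lra.
  + move=> y Ly ym /= [Ky nMy]; apply: (Heta y Ly nMy _ Ky); lra.
have [x [Lx hx hxe]] := baire2 hn eM HG.
have Xx : XX x by right.
rewrite KE in Xx; case: Xx => k _ Kx.
case: (pselect (M x)) => [Mx|nMx].
  by have [j ej] := eMs x Mx; exact: (hxe j (esym ej)).
exact: (hx k (conj Kx nMx)).
Qed.

End Main.

Theorem mainTheorem16 (R : realType) (n : nat) (hn : (2 <= n)%N)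
  (M : set (pt R n)) (hMc : countable M) (hMd : dense_in_Ln M) :
  (~ perfect_sp (@Xn R n) (tau_open M) /\ ~ lindelof_sp (@Xn R n) (tau_open M)) /\
  (second_countable_sp (tau_open (@Ln R n `\` M)) /\
   ~ sigma_compact_sp (@Xn R n) (tau_open (@Ln R n `\` M))).
Proof.
split; split.
- exact: (notPerfect hn hMc hMd).
- exact: (notLindelof hn hMc hMd).
- exact: (secondCountable hn hMc hMd).
- exact: (notSigma hn hMc hMd).
Qed.
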